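(* Let $Q,R\subseteq\mathcal{P}$, and define $\mu=TM(\xi_Q)\cdot TM(\xi_R)$ and $\nu=\gcd\!\left(\dfrac{\xi_Q}{TM(\xi_Q)},\dfrac{\xi_R}{TM(\xi_R)}\right)$. Then $\xi_{Q\cup R}=\mu\cdot\nu$.
   Context: $\mathcal{P}=\{P_1,\ldots,P_n\}$; $\varphi:2^{\mathcal{P}}\to\mathbb{F}_2^n$ sends a set to its indicator vector; for $S\subseteq\mathcal{P}$, $\xi_S(Y_1,\ldots,Y_n)=\prod_{i=1}^n(1+Y_i+\varphi(S)_i)$, i.e. $\xi_S=\prod_{i:P_i\in S}Y_i\cdot\prod_{i:P_i\notin S}(1+Y_i)$. $TM(f)$ is the smallest monomial of $f$ in the lexicographic order with $Y_n\prec\cdots\prec Y_1$. The quotient $\xi_S/TM(\xi_S)$ is the polynomial $\prod_{i:P_i\notin S}(1+Y_i)$; the gcd is taken in $\mathbb{F}_2[Y_1,\ldots,Y_n]$; products and the equality are in the Boolean polynomial ring $\mathbb{F}_2[\bar Y]/\langle Y_i^2-Y_i\rangle$. *)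

(* Defs.v *)
From HB Require Import structures.
From mathcomp Require Import all_boot all_order all_algebra.
From mathcomp Require Import mpoly.
Set Implicit Arguments. Unset Strict Implicit. Unset Printing Implicit Defensive.
Import GRing.Theory.
Local Open Scope ring_scope.

(* Boolean polynomials over F_2 in variables Y_1..Y_n, indexed by 'I_n
   (Y_{i+1} is 'X_i, P_{i+1} is the ordinal i). *)
Notation F2 := ('F_2 : fieldType).
Notation BPoly n := {mpoly F2[n]}.

Definition phi n (S : {set 'I_n}) (i : 'I_n) : F2 := (i \in S)%:R.

Definition xi n (S : {set 'I_n}) : BPoly n :=
  \prod_(i < n) (1 + 'X_i + (phi S i)%:MP).

(* strict lexicographic order on monomials with Y_n < ... < Y_1:
   compare the exponents of Y_1, Y_2, ... in that order *)
Definition lexlt n (m1 m2 : 'X_{1..n}) : bool :=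
  [exists i : 'I_n, (m1 i < m2 i)%N &&
     [forall j : 'I_n, (j < i)%N ==> (m1 j == m2 j)]].

Definition lexmin n (m0 : 'X_{1..n}) (s : seq 'X_{1..n}) : 'X_{1..n} :=
  foldr (fun m acc => if lexlt m acc then m else acc) m0 s.

Definition TMmon n (f : BPoly n) : 'X_{1..n} :=
  lexmin (head 0%MM (msupp f)) (msupp f).
Definition TM n (f : BPoly n) : BPoly n := 'X_[TMmon f].

(* f / 'X_[t] : exact division of f by the monomial t (meaningful when
   every monomial of f is divisible by t) *)
Definition mdivmon n (f : BPoly n) (t : 'X_{1..n}) : BPoly n :=
  \sum_(m <- msupp f) f@_m *: 'X_[(m - t)%MM].

Definition mdvd n (a b : BPoly n) : Prop := exists c : BPoly n, b = a * c.
Definition is_gcd n (g a b : BPoly n) : Prop :=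
  [/\ mdvd g a, mdvd g b & forall d, mdvd d a -> mdvd d b -> mdvd d g].

(* equality in the Boolean ring F_2[Y]/<Y_i^2 - Y_i> *)
Definition beq n (p q : BPoly n) : Prop :=
  exists c : 'I_n -> BPoly n, p - q = \sum_(i < n) c i * ('X_i ^+ 2 - 'X_i).

(* Main.v *)
Require Import Defs.
From mathcomp Require Import all_boot all_order all_algebra.
From mathcomp Require Import mpoly.
From mathcomp Require Import zify.
Local Open Scope ring_scope.
Import GRing.Theory.

Lemma F2_1 (x : F2) : x != 0 -> x = 1.
Proof. by case: x => [[|[|]]] //= ? ?; apply/val_inj. Qed.
Lemma F2_2 : (1 + 1 : F2) = 0.
Proof. by apply/val_inj. Qed.


Lemma size_lemma (R : idomainType) (a b : {poly R}) (c : R) :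
  a * b = c%:P -> c != 0 -> a = (a`_0)%:P.
Proof.
move=> hF nz.
have nzF : a * b != 0 by rewrite hF polyC_eq0.
have nzd : a != 0 by apply: contraNneq nzF => ->; rewrite mul0r.
have nze : b != 0 by apply: contraNneq nzF => ->; rewrite mulr0.
have hs1 := size_mul nzd nze.
rewrite hF size_polyC nz in hs1.
have ge := size_poly_gt0 a; have ge' := size_poly_gt0 b.
rewrite nzd in ge; rewrite nze in ge'.
apply: size1_polyC.
by move: hs1 ge ge'; move: (size a) (size b) => x y /=; lia.
Qed.

Section S.
Variable n : nat.
Notation P := {mpoly F2[n]}.

Lemma mpoly_ext (T : comRingType) (phi psi : P -> T) :
  (forall p q, phi (p + q) = phi p + phi q) -> phi 0 = 0 ->
  (forall p q, phi (p * q) = phi p * phi q) -> phi 1 = 1 ->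
  (forall p q, psi (p + q) = psi p + psi q) -> psi 0 = 0 ->
  (forall p q, psi (p * q) = psi p * psi q) -> psi 1 = 1 ->
  (forall c, phi c%:MP = psi c%:MP) -> (forall i, phi 'X_i = psi 'X_i) ->
  forall p, phi p = psi p.
Proof.
move=> pD p0 pM p1 sD s0 sM s1 hC hX p.
have pX x k : phi (x ^+ k) = phi x ^+ k.
  by elim: k => [|k IH]; rewrite ?expr0 ?p1 // !exprS pM IH.
have sX x k : psi (x ^+ k) = psi x ^+ k.
  by elim: k => [|k IH]; rewrite ?expr0 ?s1 // !exprS sM IH.
rewrite (mpolyE p) (big_morph phi pD p0) (big_morph psi sD s0).
apply: eq_bigr => m _; rewrite -mul_mpolyC pM sM hC mpolyXE_id.
rewrite (big_morph phi pM p1) (big_morph psi sM s1); congr (_ * _).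
by apply: eq_bigr => i _; rewrite pX sX hX.
Qed.

Definition cf : {rmorphism F2 -> {poly P}} := (polyC \o (@mpolyC n F2))%FUN.
Definition hk (k : 'I_n) (j : 'I_n) : {poly P} := if j == k then 'X else ('X_j)%:P.
Notation Fk k := (mmap cf (hk k)).
Definition sig k (p : P) : P := (Fk k p).[0].

Lemma FkX k j : Fk k 'X_j = hk k j.
Proof. by rewrite mmapX mmap1U. Qed.
Lemma FkC k c : Fk k c%:MP = (c%:MP)%:P.
Proof. by rewrite mmapC. Qed.

Lemma sigD k p q : sig k (p + q) = sig k p + sig k q.
Proof. by rewrite /sig rmorphD hornerD. Qed.
Lemma sig0 k : sig k 0 = 0.
Proof. by rewrite /sig rmorph0 horner0. Qed.
Lemma sigM k p q : sig k (p * q) = sig k p * sig k q.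
Proof. by rewrite /sig rmorphM hornerM. Qed.
Lemma sig1 k : sig k 1 = 1.
Proof. by rewrite /sig rmorph1 hornerC. Qed.
Lemma sigC k c : sig k c%:MP = c%:MP.
Proof. by rewrite /sig FkC hornerC. Qed.
Lemma sigX k j : sig k 'X_j = if j == k then 0 else 'X_j.
Proof. by rewrite /sig FkX /hk; case: eqP => _; rewrite ?hornerX ?hornerC. Qed.

Lemma FG k p : (Fk k p).['X_k] = p.
Proof.
apply: (@mpoly_ext _ (fun p => (Fk k p).['X_k]) id) => //=.
- by move=> ??; rewrite rmorphD hornerD.
- by rewrite rmorph0 horner0.
- by move=> ??; rewrite rmorphM hornerM.
- by rewrite rmorph1 hornerC.
- by move=> c; rewrite FkC hornerC.
- by move=> i; rewrite FkX /hk; case: eqP => [->|_]; rewrite ?hornerX ?hornerC.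
Qed.

Lemma Fsig k p : Fk k (sig k p) = (sig k p)%:P.
Proof.
apply: (@mpoly_ext _ (fun p => Fk k (sig k p)) (fun p => (sig k p)%:P)) => //=.
- by move=> ??; rewrite sigD rmorphD.
- by rewrite sig0 rmorph0.
- by move=> ??; rewrite sigM rmorphM.
- by rewrite sig1 rmorph1.
- by move=> ??; rewrite sigD polyCD.
- by rewrite sig0.
- by move=> ??; rewrite sigM polyCM.
- by rewrite sig1.
- by move=> c; rewrite sigC FkC.
- move=> i; rewrite sigX; case: eqP => [_|ne]; first by rewrite rmorph0 polyC0.
  by rewrite FkX /hk (introF eqP ne).
Qed.

Lemma indep k (d e : P) : d * e != 0 -> sig k (d * e) = d * e -> sig k d = d.
Proof.
move=> nz hs.
have hF : Fk k d * Fk k e = (d * e)%:P by rewrite -(rmorphM (mmap cf (hk k))); have := Fsig k (d * e); rewrite hs.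
move: hF; set A := Fk k d; set B := Fk k e => hF.
have E := size_lemma _ _ _ _ hF nz.
by rewrite /sig -[RHS](FG k d) -/A E !hornerC.
Qed.

Definition mS (S : {set 'I_n}) : 'X_{1..n} := [multinom ((i \in S) : nat) | i < n].
Definition cS (S : {set 'I_n}) : P := \prod_(i < n | i \notin S) (1 + 'X_i).

Lemma two0 : (1 + 1 : P) = 0.
Proof. by rewrite -mpolyC1 -mpolyCD F2_2 mpolyC0. Qed.

Lemma xiE S : xi S = cS S * 'X_[mS S].
Proof.
rewrite /xi mpolyXE_id (bigID (fun i => i \in S)) /= mulrC; congr (_ * _).
  by apply: eq_bigr => i iS; rewrite /phi (negbTE iS) mpolyC0 addr0.
rewrite [RHS](bigID (fun i => i \in S)) /= [X in _ = _ * X]big1 ?mulr1.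
  apply: eq_bigr => i iS; rewrite mnmE iS expr1 /phi iS /= mpolyC1.
  by rewrite addrAC two0 add0r.
by move=> i iS; rewrite mnmE (negbTE iS) expr0.
Qed.

Lemma meval0_coef (p : P) : p.@[fun _ => 0] = p@_0%MM.
Proof.
rewrite mevalE.
have E (m : 'X_{1..n}) : \prod_(i < n) (0 : F2) ^+ m i = (m == 0%MM)%:R.
  case: eqP => [->|/eqP nz].
    by rewrite big1 // => i _; rewrite mnm0E expr0.
  have [i hi] : exists i, m i != 0%N.
    apply/existsP; apply: contraR nz => /existsPn H.
    by apply/eqP/mnmP => i; rewrite mnm0E; apply/eqP; move: (H i); rewrite negbK.
  by rewrite (bigD1 i) //= expr0n (negbTE hi) mul0r.
under eq_bigr do rewrite E mulr_natr mulrb.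
rewrite -big_mkcond /= -big_filter.
have [hin|hnin] := boolP (0%MM \in msupp p).
  rewrite (@eq_filter _ _ (pred1 0%MM)) //.
  by rewrite filter_pred1_uniq ?msupp_uniq // big_seq1.
rewrite big_seq big_pred0 ?(memN_msupp_eq0 hnin) // => m.
by rewrite mem_filter; apply/andP => -[/eqP e hm]; move: hnin; rewrite -e hm.
Qed.

Lemma cS0 S : (cS S)@_0%MM = 1.
Proof.
rewrite -meval0_coef rmorph_prod big1 // => i _ /=.
by rewrite rmorphD /= mevalXU meval1 addr0.
Qed.

Lemma msupp_xi S : perm_eq (msupp (xi S)) [seq (mS S + m')%MM | m' <- msupp (cS S)].
Proof. by rewrite xiE msuppMX. Qed.

Lemma lexlt_asym (m1 m2 : 'X_{1..n}) : lexlt m1 m2 -> ~~ lexlt m2 m1.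
Proof.
move=> /existsP[i /andP[lt1 /forallP h1]]; apply/negP => /existsP[j /andP[lt2 /forallP h2]].
case: (ltngtP i j) => [ij|ji|eij].
- by have := h2 i; rewrite ij /= => /eqP e; rewrite e ltnn in lt1.
- by have := h1 j; rewrite ji /= => /eqP e; rewrite e ltnn in lt2.
- have e : i = j by apply/val_inj.
  by subst j; have := ltn_trans lt1 lt2; rewrite ltnn.
Qed.

Lemma lexmin_mem (m0 : 'X_{1..n}) s : lexmin m0 s \in m0 :: s.
Proof.
elim: s => [|x s IH] /=; first by rewrite inE.
case: ifP => _; rewrite !inE ?eqxx ?orbT //.
by move: IH; rewrite inE => /orP[->|->]; rewrite ?orbT.
Qed.

Lemma lexmin_eq (m0 : 'X_{1..n}) s x : x \in m0 :: s ->
  (forall y, y \in m0 :: s -> y != x -> lexlt x y) -> lexmin m0 s = x.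
Proof.
elim: s => [|y s IH] /= hx hmin.
  by move: hx; rewrite inE => /eqP.
have sub z : z \in m0 :: s -> z \in m0 :: y :: s.
  by rewrite !inE => /orP[->|->]; rewrite ?orbT.
case Hx: (x \in m0 :: s).
  rewrite IH //; last by move=> z hz; apply: hmin; apply: sub.
  case: ifP => // hy; case: (eqVneq y x) => // nyx.
  have := hmin y; rewrite !inE eqxx orbT => /(_ isT nyx) /lexlt_asym.
  by rewrite hy.
have eyx : x = y.
  by move: hx Hx; rewrite !inE; case: (x =P m0) => //= _; case: (x =P y) => //= _ ->.
subst y.
have hm := lexmin_mem m0 s.
have ne : lexmin m0 s != x by apply: contraFN Hx => /eqP <-.
by rewrite (hmin _ (sub _ hm) ne).
Qed.

Lemma lexlt_add (m m' : 'X_{1..n}) : m' != 0%MM -> lexlt m (m + m')%MM.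
Proof.
move=> nz.
have [i hi] : exists i, m' i != 0%N.
  apply/existsP; apply: contraR nz => /existsPn H.
  by apply/eqP/mnmP => i; rewrite mnm0E; apply/eqP; move: (H i); rewrite negbK.
case: (@arg_minnP _ i (fun j : 'I_n => m' j != 0%N) (fun j : 'I_n => nat_of_ord j) hi) => j hj jmin.
apply/existsP; exists j; rewrite mnmDE -{1}[m j]addn0 ltn_add2l lt0n hj /=.
apply/forallP => k; apply/implyP => kj; rewrite mnmDE.
case: (eqVneq (m' k) 0%N) => [->|hk]; first by rewrite addn0.
by have := jmin k hk; rewrite leqNgt kj.
Qed.

Lemma TMmonE S : TMmon (xi S) = mS S.
Proof.
have memS : mS S \in msupp (xi S).
  rewrite mcoeff_msupp xiE; have := mcoeffMX (cS S) (mS S) 0%MM.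
  by rewrite addm0 => ->; rewrite cS0 oner_neq0.
have hd : head 0%MM (msupp (xi S)) \in msupp (xi S).
  by move: memS; case: msupp => //= a l _; rewrite inE eqxx.
have key y : y \in msupp (xi S) -> y != mS S -> lexlt (mS S) y.
  rewrite (perm_mem (msupp_xi S)) => /mapP[m' hm' ->] ne.
  apply: lexlt_add; apply: contraNneq ne => ->; by rewrite addm0.
apply: lexmin_eq; first by rewrite inE memS orbT.
by move=> y; rewrite inE => /orP[/eqP->|]; apply: key.
Qed.

Lemma mdivmonE S : mdivmon (xi S) (TMmon (xi S)) = cS S.
Proof.
rewrite TMmonE /mdivmon (perm_big _ (msupp_xi S)) big_map [RHS]mpolyE.
by apply: eq_bigr => m _; rewrite xiE mcoeffMX addmC addmK.
Qed.


Lemma sig_prod k (r : seq 'I_n) (Pr : pred 'I_n) :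
  (forall j, j \in r -> Pr j -> j != k) ->
  sig k (\prod_(j <- r | Pr j) (1 + 'X_j)) = \prod_(j <- r | Pr j) (1 + 'X_j).
Proof.
move=> h; rewrite (big_morph (sig k) (sigM k) (sig1 k)).
rewrite big_seq_cond [RHS]big_seq_cond; apply: eq_bigr => j /andP[jr pj].
by rewrite sigD sig1 sigX (negbTE (h j jr pj)).
Qed.

Lemma sig_1X k : sig k (1 + 'X_k) = 1.
Proof. by rewrite sigD sig1 sigX eqxx addr0. Qed.

Lemma divide_lemma (d D : P) (T : seq 'I_n) : uniq T ->
  (forall k, k \in T -> sig k d = d) -> (forall k, k \in T -> sig k D = D) ->
  mdvd d (D * \prod_(k <- T) (1 + 'X_k)) -> mdvd d D.
Proof.
elim: T => [|k T IH] /= uT hd hD [e he].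
  by exists e; rewrite -he big_nil mulr1.
move/andP: uT => [kT uT].
apply: IH => //.
- by move=> j jT; apply: hd; rewrite inE jT orbT.
- by move=> j jT; apply: hD; rewrite inE jT orbT.
exists (sig k e).
have := congr1 (sig k) he.
rewrite big_cons sigM sigM sigM sig_1X mul1r (hD k (mem_head _ _)) (hd k (mem_head _ _)).
rewrite (@sig_prod k T predT) // => j jT _; apply: contraNneq kT => <-.
exact: jT.
Qed.

Lemma cS_split (S1 S2 : {set 'I_n}) :
  cS S1 = cS (S1 :|: S2) * \prod_(k <- enum (S2 :\: S1)) (1 + 'X_k).
Proof.
rewrite /cS (bigID (fun i => i \in S2)) /= mulrC; congr (_ * _).
  by apply: eq_bigl => i; rewrite inE negb_or.
by rewrite big_enum; apply: eq_bigl => i; rewrite !inE andbC.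
Qed.

Lemma cS_neq0 S : cS S != 0.
Proof.
apply/eqP => h; have := cS0 S; rewrite h mcoeff0 => /eqP.
by rewrite eq_sym oner_eq0.
Qed.

Lemma sig_cS k (S : {set 'I_n}) : k \in S -> sig k (cS S) = cS S.
Proof.
move=> kS; apply: sig_prod => j _ jS; apply: contraNneq jS => ->; exact: kS.
Qed.

Lemma gcd_main Q R : is_gcd (cS (Q :|: R)) (cS Q) (cS R).
Proof.
split.
- by eexists; apply: cS_split.
- by eexists; rewrite setUC; apply: cS_split.
move=> d hdQ hdR.
have hind k : k \in enum (R :\: Q) -> sig k d = d.
  rewrite mem_enum !inE => /andP[kQ kR].
  case: hdR => e he.
  apply: (@indep k d e); rewrite -he; [exact: cS_neq0 | exact: sig_cS].
apply: (@divide_lemma d _ (enum (R :\: Q))) => //.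
- exact: enum_uniq.
- move=> k; rewrite mem_enum !inE => /andP[_ kR].
  by apply: sig_cS; rewrite inE kR orbT.
- by rewrite -cS_split.
Qed.

Lemma gcd_unique (g nu a b : P) : is_gcd g a b -> is_gcd nu a b -> g != 0 -> nu = g.
Proof.
case=> ga gb gmax [na nb nmax] nz.
have [u hu] := nmax g ga gb.
have [v hv] := gmax nu na nb.
have : g * (u * v) = g * 1 by rewrite mulr1 mulrA -hu -hv.
move/(mulfI nz); rewrite mulrC => uv1.
have := @mpoly_intro_unit n F2 u v uv1.
case/andP => /eqP hu0 hunit.
have u01 : u@_0%MM = 1 by apply: F2_1; rewrite -unitfE.
by rewrite hu hu0 u01 mpolyC1 mulr1.
Qed.

Definition inI (p : P) := exists c : 'I_n -> P, p = \sum_(i < n) c i * ('X_i ^+ 2 - 'X_i).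

Lemma inI0 : inI 0.
Proof. by exists (fun _ => 0); rewrite big1 // => i _; rewrite mul0r. Qed.

Lemma inID p q : inI p -> inI q -> inI (p + q).
Proof.
move=> [c ->] [c' ->]; exists (fun i => c i + c' i).
by rewrite -big_split; apply: eq_bigr => i _; rewrite mulrDl.
Qed.

Lemma inIMl p q : inI p -> inI (q * p).
Proof.
move=> [c ->]; exists (fun i => q * c i).
by rewrite mulr_sumr; apply: eq_bigr => i _; rewrite mulrA.
Qed.

Lemma inIMr p q : inI p -> inI (p * q).
Proof. by rewrite mulrC; apply: inIMl. Qed.

Lemma inI_gen i : inI ('X_i ^+ 2 - 'X_i).
Proof.
exists (fun j => (j == i)%:R); rewrite (bigD1 i) //= eqxx mul1r big1 ?addr0 //.
by move=> j /negbTE ->; rewrite mul0r.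
Qed.

Lemma prod_diff (f g : 'I_n -> P) : (forall i, inI (f i - g i)) ->
  inI (\prod_(i < n) f i - \prod_(i < n) g i).
Proof.
move=> h; apply: (big_rec2 (fun y1 y2 => inI (y1 - y2))).
  by rewrite subrr; exact: inI0.
move=> i y1 y2 _ hy.
have -> : f i * y1 - g i * y2 = (f i - g i) * y1 + g i * (y1 - y2).
  by rewrite mulrBl mulrBr addrA subrK.
by apply: inID; [apply: inIMr | apply: inIMl].
Qed.

Lemma XmSE S : 'X_[mS S] = \prod_(i < n) 'X_i ^+ (i \in S) :> P.
Proof. by rewrite mpolyXE_id; apply: eq_bigr => i _; rewrite mnmE. Qed.

Lemma mon_diff Q R :
  inI ('X_[mS (Q :|: R)] - 'X_[mS Q] * 'X_[mS R] :> P).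
Proof.
rewrite !XmSE -big_split /=; apply: prod_diff => i.
rewrite inE; case: (i \in Q); case: (i \in R) => /=;
  rewrite ?expr0 ?expr1 ?mulr1 ?mul1r ?subrr; try exact: inI0.
have -> : 'X_i - 'X_i * 'X_i = ('X_i ^+ 2 - 'X_i) * -1 :> P.
  by rewrite mulrN1 opprB expr2.
by apply: inIMr; apply: inI_gen.
Qed.

End S.

Theorem mainTheorem16 (n : nat) (Q R : {set 'I_n}) :
  let mu := TM (xi Q) * TM (xi R) in
  let a := mdivmon (xi Q) (TMmon (xi Q)) in
  let b := mdivmon (xi R) (TMmon (xi R)) in
  (exists nu, is_gcd nu a b) /\
  (forall nu, is_gcd nu a b -> beq (xi (Q :|: R)) (mu * nu)).
Proof.
cbv zeta; rewrite !mdivmonE; split.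
  by exists (cS _ (Q :|: R)); apply: gcd_main.
move=> nu hnu.
rewrite (@gcd_unique n _ _ _ _ (gcd_main _ Q R) hnu (cS_neq0 _ _)).
rewrite /beq /TM !TMmonE xiE.
have -> : cS _ (Q :|: R) * 'X_[mS _ (Q :|: R)] - 'X_[mS _ Q] * 'X_[mS _ R] * cS _ (Q :|: R)
  = ('X_[mS _ (Q :|: R)] - 'X_[mS _ Q] * 'X_[mS _ R]) * cS _ (Q :|: R) :> {mpoly F2[n]}.
  by rewrite mulrBl mulrC.
exact: (@inIMr n _ _ (mon_diff _ Q R)).
Qed.
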